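(* Let $f \in \mathbb{Z}[x]$ be a tower-stable polynomial and let $b$ be an $f$-valid positive integer. Then $\lambda_f(b^{n+1})$ divides $b^n$ for every sufficiently large positive integer $n$.
   Context: For a positive integer $m$, $f_m:\mathbb{Z}/m\mathbb{Z}\to\mathbb{Z}/m\mathbb{Z}$ is the reduction of $f$, and $\lambda_f(m)$ is its period: the least common multiple over $y\in\mathbb{Z}/m\mathbb{Z}$ of the cycle length of $y$ (the least $l\ge1$ with $f_m^k(y)=f_m^{k+l}(y)$ for some $k\ge0$). $f$ is tower-stable if for every prime $p$, $f_p$ is not a cyclic permutation of $\mathbb{Z}/p\mathbb{Z}$ of length $p$. A positive integer $b$ is valid if for all primes $p,q$ with $p\mid b$ and $q\mid p-1$ we have $q\mid b$; $b$ is $f$-valid if $b$ is square-free, valid, and for all primes $p,q$ with $p\mid b$ and $q\mid\lambda_f(p)$ we have $q\mid b$. *)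

(* Defs.v *)
From HB Require Import structures.
From mathcomp Require Import all_boot all_order all_algebra.
From mathcomp Require Import boolp.
Set Implicit Arguments. Unset Strict Implicit. Unset Printing Implicit Defensive.
Import GRing.Theory Num.Theory.

Section Dyn.
Variables (T : finType) (h : T -> T).

Definition is_eperiod (y : T) (l : nat) : Prop :=
  0 < l /\ exists k, iter k h y = iter (k + l) h y.

Lemma eperiod_exists (y : T) : exists l, `[< is_eperiod y l >].
Proof.
pose F := fun i : 'I_#|T|.+1 => iter i h y.
have : ~~ injectiveb F.
  apply/negP => /injectiveP inj.
  by move: (leq_card F inj); rewrite card_ord ltnn.
case/injectivePn => i [j] neq Fij.
have neq' : (i : nat) != j.
  apply: contra neq => /eqP e; apply/eqP; exact: val_inj.
clear neq.
have Fij' : iter i h y = iter j h y := Fij.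
clear Fij.
move: (i : nat) (j : nat) Fij' neq' => {i j F} i j Fij neq.
wlog lt_ij : i j neq Fij / i < j.
  move=> W; case: (ltngtP i j) => [lt|lt|e].
  - exact: (W i j).
  - by apply: (W j i); rewrite // eq_sym.
  - by move: neq; rewrite e eqxx.
exists (j - i); apply/asboolP; split; first by rewrite subn_gt0.
exists i; rewrite subnKC; first exact: Fij.
exact: ltnW.
Qed.

Definition cycle_len (y : T) : nat := ex_minn (eperiod_exists y).

End Dyn.

(* reduction f_m : Z/mZ -> Z/mZ of f, with Z/mZ represented by 'I_m *)
Definition red_map (f : {poly int}) (m : nat) (y : 'I_m) : 'I_m :=
  Ordinal (ltn_pmod `|(intdiv.modz (f.[Posz (nat_of_ord y)]) (Posz m))|%N
                    (leq_ltn_trans (leq0n y) (ltn_ord y))).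
Arguments red_map f m y : clear implicits.

Definition lambda_f (f : {poly int}) (m : nat) : nat :=
  \big[lcmn/1%N]_(y : 'I_m) cycle_len (red_map f m) y.

Definition full_cyclic_perm (T : finType) (h : T -> T) : Prop :=
  bijective h /\ forall x y : T, exists k, iter k h x = y.

Definition tower_stable (f : {poly int}) : Prop :=
  forall p : nat, prime p -> ~ full_cyclic_perm (red_map f p).

Definition squarefree (b : nat) : Prop :=
  forall p : nat, prime p -> ~~ (p ^ 2 %| b).

Definition valid (b : nat) : Prop :=
  forall p q : nat, prime p -> prime q -> p %| b -> q %| p.-1 -> q %| b.

Definition f_valid (f : {poly int}) (b : nat) : Prop :=
  squarefree b /\ valid b /\
  forall p q : nat, prime p -> prime q -> p %| b -> q %| lambda_f f p -> q %| b.

(* Main.v *)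
Require Import Defs.
From mathcomp Require Import all_boot all_algebra.
From mathcomp Require Import boolp cyclic.
From mathcomp Require Import ring lra zify.

Module Part1.
Import GRing.Theory Num.Theory.
Local Open Scope ring_scope.

Lemma dvdzD (d a b : int) : (d %| a)%Z -> (d %| b)%Z -> (d %| a + b)%Z.
Proof. exact: rpredD. Qed.
Lemma dvdzB (d a b : int) : (d %| a)%Z -> (d %| b)%Z -> (d %| a - b)%Z.
Proof. exact: rpredB. Qed.
Lemma dvdzN (d a : int) : (d %| a)%Z -> (d %| - a)%Z.
Proof. by rewrite rpredN. Qed.
Lemma dvdz_eqr (d a b : int) : a = b -> (d %| a)%Z -> (d %| b)%Z.
Proof. by move=> ->. Qed.

Lemma horner_diff (f : {poly int}) (z e : int) : (e %| f.[z+e] - f.[z])%Z.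
Proof.
elim/poly_ind: f => [|q c IH]; first by rewrite !horner0 subr0 dvdz0.
rewrite !hornerMXaddC.
have -> : q.[z + e] * (z + e) + c - (q.[z] * z + c) = (q.[z+e] - q.[z]) * z + q.[z+e] * e by ring.
apply: dvdzD; [exact: dvdz_mulr | exact: dvdz_mull].
Qed.

Lemma horner_cong (f : {poly int}) (d a b : int) : (d %| a - b)%Z -> (d %| f.[a] - f.[b])%Z.
Proof.
move=> h; apply: dvdz_trans h _.
have := horner_diff f b (a - b); have -> : b + (a - b) = a by ring. done.
Qed.

Lemma taylor (f : {poly int}) (z e : int) :
  (e * e %| f.[z+e] - f.[z] - f^`().[z] * e)%Z.
Proof.
elim/poly_ind: f => [|q c IH]; first by rewrite deriv0 !horner0 !subr0 mul0r subr0 dvdz0.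
rewrite derivMXaddC !hornerMXaddC hornerD hornerM hornerX.
have -> : q.[z + e] * (z + e) + c - (q.[z] * z + c) - (q.[z] + q^`().[z] * z) * e
   = (q.[z+e] - q.[z] - q^`().[z] * e) * z + (q.[z+e] - q.[z]) * e by ring.
apply: dvdzD; [exact: dvdz_mulr | exact: dvdz_mul (horner_diff _ _ _) (dvdzz e)].
Qed.

Definition Lin (p : int) (F : int -> int) (c x : int) :=
  forall z e, (p %| z - x)%Z -> (p %| e)%Z -> (p * e %| F (z + e) - F z - c * e)%Z.

Lemma poly_lin (f : {poly int}) p x : Lin p (horner f) (f^`().[x]) x.
Proof.
move=> z e hz he.
have -> : f.[z + e] - f.[z] - f^`().[x] * e =
   (f.[z + e] - f.[z] - f^`().[z] * e) + (f^`().[z] - f^`().[x]) * e by ring.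
apply: dvdzD.
  apply: dvdz_trans (taylor f z e); exact: dvdz_mul.
exact: dvdz_mul (@horner_cong _ _ _ _ hz) (dvdzz e).
Qed.

Lemma lin_maps p F c x z : Lin p F c x -> (p %| z - x)%Z -> (p %| F z - F x)%Z.
Proof.
move=> L hz.
have h : (p * (z - x) %| F z - F x - c * (z - x))%Z.
  have := L x (z - x); rewrite subrr dvdz0; have -> : x + (z - x) = z by ring.
  by apply.
have h2 : (p %| F z - F x - c * (z - x))%Z.
  apply: dvdz_trans h; exact: dvdz_mulr.
have -> : F z - F x = (F z - F x - c * (z - x)) + c * (z - x) by ring.
by apply: dvdzD => //; apply: dvdz_mull.
Qed.

Lemma lin_base p F c x x' : Lin p F c x -> (p %| x' - x)%Z -> Lin p F c x'.
Proof.
move=> L h z e hz he; apply: L => //.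
have -> : z - x = (z - x') + (x' - x) by ring.
exact: dvdzD.
Qed.

Lemma lin_coef p F c c' x : Lin p F c x -> (p %| c - c')%Z -> Lin p F c' x.
Proof.
move=> L h z e hz he.
have -> : F (z + e) - F z - c' * e = (F (z + e) - F z - c * e) + (c - c') * e by ring.
apply: dvdzD; first exact: L.
exact: dvdz_mul h (dvdzz e).
Qed.

Lemma lin_ext p F G c x : (forall z, F z = G z) -> Lin p F c x -> Lin p G c x.
Proof. by move=> E L z e hz he; rewrite -!E; apply: L. Qed.

Lemma lin_comp p F G c d x : Lin p F c x -> Lin p G d (F x) ->
  Lin p (fun z => G (F z)) (d * c) x.
Proof.
move=> LF LG z e hz he /=.
set e' := F (z + e) - F z.
have h1 : (p * e %| e' - c * e)%Z by apply: LF.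
have h1' : (e %| e')%Z.
  have -> : e' = (e' - c * e) + c * e by ring.
  apply: dvdzD; last exact: dvdz_mull.
  by apply: dvdz_trans h1; apply: dvdz_mull.
have he' : (p %| e')%Z.
  apply: dvdz_trans h1'; exact: he.
have hFz : (p %| F z - F x)%Z by apply: lin_maps LF hz.
have h2 := LG (F z) e' hFz he'.
have -> : F (z + e) = F z + e' by rewrite /e'; ring.
have -> : G (F z + e') - G (F z) - d * c * e =
   (G (F z + e') - G (F z) - d * e') + d * (e' - c * e) by ring.
apply: dvdzD; last exact: dvdz_mull.
apply: dvdz_trans h2.
exact: dvdz_mul (dvdzz p) h1'.
Qed.

Lemma lin_iter_fixed p H c x : Lin p H c x -> (p %| H x - x)%Z ->
  forall i, Lin p (iter i H) (c ^+ i) x /\ (p %| iter i H x - x)%Z.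
Proof.
move=> L hx; elim=> [|i [IH1 IH2]].
  split; last by rewrite /= subrr dvdz0.
  move=> z e _ _ /=; rewrite expr0 mul1r.
  have -> : z + e - z - e = 0 by ring.
  exact: dvdz0.
split.
  rewrite exprS.
  apply: (@lin_ext _ (fun z => H (iter i H z))) => //.
  apply: lin_comp IH1 _.
  exact: lin_base L IH2.
rewrite iterS.
have -> : H (iter i H x) - x = (H (iter i H x) - H x) + (H x - x) by ring.
apply: dvdzD => //; exact: lin_maps L IH2.
Qed.

Lemma lin_iter_gen p F (cF : int -> int) :
  (forall x, Lin p F (cF x) x) -> forall i x, exists c, Lin p (iter i F) c x.
Proof.
move=> L; elim=> [|i IH] x.
  exists 1 => z e _ _ /=; rewrite mul1r.
  have -> : z + e - z - e = 0 by ring.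
  exact: dvdz0.
have [c Lc] := IH x.
exists (cF (iter i F x) * c).
apply: (@lin_ext _ (fun z => F (iter i F z))) => //.
exact: lin_comp Lc (L _).
Qed.
Arguments lin_iter_fixed {p H c x}.
Arguments lin_maps {p F c x z}.
Arguments lin_base {p F c x x'}.
Arguments lin_coef {p F c c' x}.
Arguments lin_comp {p F G c d x}.
Arguments horner_cong f {d a b}.
Arguments dvdzD {d a b}.
Arguments dvdzB {d a b}.
Arguments dvdzN {d a}.
Arguments dvdz_eqr {d a b}.

End Part1.
Import Part1.

Module Part2.
Import GRing.Theory Num.Theory.
Local Open Scope ring_scope.

Lemma contr (p : int) H x : Lin p H 0 x -> (p %| H x - x)%Z ->
  forall i, (p ^+ i.+1 %| iter i H (H x) - iter i H x)%Z.
Proof.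
move=> L hx; elim=> [|i IH]; first by rewrite expr1.
have [_ hz] := lin_iter_fixed L hx i.
set z := iter i H x in hz IH *.
rewrite !iterS -/z.
set e := iter i H (H x) - z in IH *.
have -> : H (iter i H (H x)) = H (z + e) by rewrite /e; congr H; ring.
have he : (p %| e)%Z by apply: dvdz_trans IH; rewrite exprS dvdz_mulr.
have := L z e hz he; rewrite mul0r subr0 => h.
apply: dvdz_trans h; rewrite exprS; exact: dvdz_mul (dvdzz p) IH.
Qed.

Lemma lift (p : nat) H x (j : nat) : Lin p H 1 x -> (0 < j)%N -> (p%:Z ^+ j %| H x - x)%Z ->
  (p%:Z ^+ j.+1 %| iter p H x - x)%Z.
Proof.
move=> L j0 hd.
set d := H x - x in hd.
suff key : forall i, (p%:Z ^+ j.+1 %| iter i H x - x - i%:Z * d)%Z.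
  have := key p.
  have -> : iter p H x - x = (iter p H x - x - p%:Z * d) + p%:Z * d by ring.
  move=> h; apply: dvdzD => //; rewrite exprS; exact: dvdz_mul (dvdzz _) hd.
elim=> [|i IH]; first by rewrite /= subrr mul0r subr0 dvdz0.
set e := iter i H x - x.
have hj : (p%:Z ^+ j %| e)%Z.
  have -> : e = (iter i H x - x - i%:Z * d) + i%:Z * d by rewrite /e; ring.
  apply: dvdzD; last exact: dvdz_mull.
  apply: dvdz_trans IH; rewrite exprS; exact: dvdz_mull.
have he : (p%:Z %| e)%Z.
  apply: dvdz_trans hj; clear -j0; case: j j0 => // j _; rewrite exprS; exact: dvdz_mulr.
have := L x e; rewrite subrr dvdz0 mul1r => /(_ isT he) h.
have -> : iter i.+1 H x - x - (i.+1)%:Z * d =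
   (H (x + e) - H x - e) + (iter i H x - x - i%:Z * d).
  rewrite iterS /e /d; have -> : x + (iter i H x - x) = iter i H x by ring.
  rewrite intS; ring.
apply: dvdzD => //.
apply: dvdz_trans h; rewrite exprS; exact: dvdz_mul (dvdzz _) hj.
Qed.

Arguments lift {p H x j}.

Lemma lift_all (p : nat) G x : Lin p G 1 x -> (p%:Z %| G x - x)%Z ->
  forall k, (p%:Z ^+ k.+1 %| iter (p ^ k) G x - x)%Z.
Proof.
move=> L hx; elim=> [|k IH]; first by rewrite expr1 expn0.
have [Lk _] := lin_iter_fixed L hx (p ^ k).
rewrite expr1n in Lk.
have := lift Lk (ltn0Sn k) IH.
by rewrite expnS iterM.
Qed.

Section Iter.
Variable (F : int -> int).
Hypothesis Fcong : forall d a b, (d %| a - b)%Z -> (d %| F a - F b)%Z.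

Lemma cong_iter d a b i : (d %| a - b)%Z -> (d %| iter i F a - iter i F b)%Z.
Proof. by move=> h; elim: i => //= i IH; apply: Fcong. Qed.

Lemma per_shift d y k k' P : (d %| iter (k + P) F y - iter k F y)%Z -> (k <= k')%N ->
  (d %| iter (k' + P) F y - iter k' F y)%Z.
Proof.
move=> h hk.
have -> : (k' + P = (k' - k) + (k + P))%N by rewrite addnA subnK.
have -> : iter k' F y = iter (k' - k) F (iter k F y) by rewrite -iterD subnK.
rewrite iterD; exact: cong_iter.
Qed.

Lemma per_mul d y k P : (d %| iter (k + P) F y - iter k F y)%Z ->
  forall j k', (k <= k')%N -> (d %| iter (k' + P * j) F y - iter k' F y)%Z.
Proof.
move=> h; elim=> [|j IH] k' hk; first by rewrite muln0 addn0 subrr dvdz0.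
have -> : iter (k' + P * j.+1) F y - iter k' F y =
   (iter ((k' + P * j) + P) F y - iter (k' + P * j) F y) + (iter (k' + P * j) F y - iter k' F y).
  have -> : (k' + P * j.+1 = (k' + P * j) + P)%N by rewrite mulnS addnA addnAC.
  ring.
apply: dvdzD; last exact: IH.
apply: per_shift h _; exact: leq_trans hk (leq_addr _ _).
Qed.

End Iter.
Arguments cong_iter {F} Fcong {d a b} i.
Arguments per_shift {F} Fcong {d y k k' P}.
Arguments per_mul {F} Fcong {d y k P}.
Arguments contr {p H x}.
Arguments lift_all {p G x}.

End Part2.
Import Part2.

Module Part3.

Section FD.
Variables (T : finType) (h : T -> T).

Lemma cycle_lenP (y : T) :
  is_eperiod h y (cycle_len h y) /\
  (forall l, is_eperiod h y l -> cycle_len h y <= l).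
Proof.
rewrite /cycle_len; case: ex_minnP => m /asboolP Pm mmin; split => // l Pl.
by apply: mmin; apply/asboolP.
Qed.

Lemma iter_per (y : T) k c : iter k h y = iter (k + c) h y ->
  forall k' j, k <= k' -> iter (k' + c * j) h y = iter k' h y.
Proof.
move=> E.
have sh : forall m, k <= m -> iter (m + c) h y = iter m h y.
  move=> m km.
  have -> : m + c = (m - k) + (k + c) by lia.
  by rewrite iterD -E -iterD subnK.
move=> k' j hk; elim: j => [|j IH]; first by rewrite muln0 addn0.
have -> : k' + c * j.+1 = (k' + c * j) + c by rewrite mulnS; lia.
rewrite sh ?IH //; exact: leq_trans hk (leq_addr _ _).
Qed.

Arguments iter_per {y k c}.

Lemma cycle_len_dvd (y : T) l : is_eperiod h y l -> cycle_len h y %| l.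
Proof.
case: (cycle_lenP y) => [[c0 [k1 E1]] cmin] [l0 [k2 E2]].
set c := cycle_len h y in c0 E1 cmin *.
set K := k1 + k2.
have P1 := iter_per E1.
have P2 := iter_per E2.
have EK : iter (K + l) h y = iter K h y.
  by have := P2 K 1 (leq_addl _ _); rewrite muln1.
case: (posnP (l %% c)) => [r0|r0']; first by rewrite /dvdn r0.
have : iter (K + l %% c) h y = iter K h y.
  rewrite -EK {2}(divn_eq l c).
  have -> : K + (l %/ c * c + l %% c) = (K + l %% c) + c * (l %/ c) by lia.
  by rewrite P1 // /K; lia.
move=> E3.
have : c <= l %% c.
  apply: cmin; split => //; exists K; by rewrite E3.
by rewrite leqNgt ltn_pmod.
Qed.

Lemma cycle_len_le (y : T) : cycle_len h y <= #|T| /\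
   (cycle_len h y = #|T| -> full_cyclic_perm h).
Proof.
case: (cycle_lenP y) => [[c0 [k1 E1]] cmin].
set c := cycle_len h y in c0 E1 cmin *.
pose phi := fun i : 'I_c => iter (k1 + i) h y.
have inj : injective phi.
  have W : forall i j : 'I_c, i < j -> phi i = phi j -> False.
    move=> i j ij E.
    have : c <= j - i.
      apply: cmin; split; first by rewrite subn_gt0.
      exists (k1 + i); move: E; rewrite /phi => ->; congr iter; lia.
    have := ltn_ord j; lia.
  move=> i j E; apply/eqP; case: (ltngtP i j) => [ij|ji|/val_inj -> //].
  - by case: (W _ _ ij E).
  - by case: (W _ _ ji (esym E)).
have := leq_card phi inj; rewrite card_ord => cle; split => // ceq.
have onto : forall t, exists i : 'I_c, t = iter (k1 + i) h y.
  move=> t; have hc : #|T| <= #|'I_c| by rewrite card_ord ceq.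
  have := inj_card_onto inj hc t.
  by case/codomP => i ->; exists i.
have cyc : forall t, iter c h t = t.
  move=> t; case: (onto t) => i ->.
  rewrite -iterD; have -> : c + (k1 + i) = i + (k1 + c) by lia.
  by rewrite iterD -E1 -iterD addnC.
split.
  exists (iter c.-1 h) => t.
    by rewrite -iterSr prednK.
  by rewrite -iterS prednK.
move=> x z; case: (onto x) => i ->; case: (onto z) => j ->.
exists (j + (c - i)).
rewrite -iterD -addnA iterD.
have -> : c - i + (k1 + i) = k1 + c by have := ltn_ord i; lia.
by rewrite -E1 -iterD addnC.
Qed.

End FD.
Arguments cycle_lenP {T h}.
Arguments cycle_len_le {T h}.
Arguments cycle_len_dvd {T h y l}.

End Part3.
Import Part3.

Module Part4.
Import GRing.Theory Num.Theory.
Local Open Scope ring_scope.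

Lemma mod_dvd (a m : int) : (m %| (a %% m)%Z - a)%Z.
Proof. by rewrite -eqz_mod_dvd modz_mod. Qed.

Lemma red_iter (f : {poly int}) (m : nat) (y : 'I_m) k :
  ((iter k (red_map f m) y : nat) : int) = ((iter k (horner f) (y : int)) %% m)%Z.
Proof.
have m0 : (0 < m)%N by case: m y => [[]|].
elim: k => [|k IH] /=.
  rewrite modz_small //; apply/andP; split => //; rewrite ltz_nat; exact: ltn_ord.
rewrite -modz_nat gez0_abs; last by rewrite modz_ge0 // -lt0n m0.
rewrite modz_mod.
rewrite IH; apply/eqP; rewrite eqz_mod_dvd; apply: horner_cong; exact: mod_dvd.
Qed.

Lemma red_iter_eq (f : {poly int}) (m : nat) (y : 'I_m) k k' :
  (iter k (red_map f m) y = iter k' (red_map f m) y) <->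
  (m%:Z %| iter k (horner f) (y : int) - iter k' (horner f) (y : int))%Z.
Proof.
rewrite -eqz_mod_dvd -!red_iter; split; first by move=> ->.
by move/eqP => [] /val_inj.
Qed.

Lemma Posz_exp (a n : nat) : (a ^ n)%N%:Z = (a%:Z ^+ n)%R.
Proof. by elim: n => [|n IH] //; rewrite expnS PoszM exprS IH. Qed.

End Part4.
Import Part4.

Module Part5.
Import GRing.Theory Num.Theory.

Lemma fermat_int (p : nat) (a : int) : prime p -> ~~ (p%:Z %| a)%Z ->
  (p%:Z %| (a ^+ p.-1 - 1)%R)%Z.
Proof.
move=> pp na.
have p0 : (0 < p)%N by exact: prime_gt0.
set r := `|(a %% p)%Z|%N.
have rE : (r : int) = (a %% p)%Z by rewrite /r gez0_abs // modz_ge0 // -lt0n p0.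
have rlt : (r < p)%N by rewrite -ltz_nat rE ltz_pmod.
have r0 : (0 < r)%N.
  rewrite lt0n; apply/eqP => r0; apply: (negP na); apply/dvdz_mod0P.
  by rewrite -rE r0.
have cop : coprime r p by rewrite coprime_sym prime_coprime // gtnNdvd.
have E := Euler_exp_totient cop; rewrite totient_prime // in E.
have h1 : (p%:Z %| ((r : int) ^+ p.-1 - 1)%R)%Z.
  by rewrite -eqz_mod_dvd -Posz_exp modz_nat E modz_nat.
have h2 : (p%:Z %| (a ^+ p.-1 - (r : int) ^+ p.-1)%R)%Z.
  rewrite -(hornerXn a) -(hornerXn (r : int)); apply: horner_cong.
  apply: (dvdz_eqr _ (dvdzN (mod_dvd a p))); rewrite rE; ring.
have -> : (a ^+ p.-1 - 1 = (a ^+ p.-1 - (r : int) ^+ p.-1) + ((r : int) ^+ p.-1 - 1))%R by ring.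
exact: dvdzD.
Qed.

Lemma small_dvd (X B n : nat) : 0 < X -> 0 < B -> X <= n ->
  (forall q, prime q -> q %| X -> q %| B) -> X %| B ^ n.
Proof.
move=> X0 B0 Xn hq.
apply/(dvdn_partP _ X0) => q; rewrite mem_primes => /and3P [pq _ qX].
rewrite p_part.
apply: dvdn_trans (dvdn_exp2l q _) (dvdn_exp2r n (hq q pq qX)).
apply: leq_trans Xn.
apply: leq_trans (ltnW (ltn_expl _ (prime_gt1 pq))) _.
exact: dvdn_leq X0 (pfactor_dvdnn q X).
Qed.

Lemma crt (b n : nat) (d : int) : 0 < b -> squarefree b ->
  (forall p, prime p -> p %| b -> ((p ^ n.+1)%N%:Z %| d)%Z) -> ((b ^ n.+1)%N%:Z %| d)%Z.
Proof.
move=> b0 sf h.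
rewrite dvdzE absz_nat.
have bn0 : 0 < b ^ n.+1 by rewrite expn_gt0 b0.
apply/(dvdn_partP _ bn0).
move=> p; rewrite pi_of_exp // /pi_of inE mem_primes => /and3P [pp _ pb].
have := h p pp pb; rewrite dvdzE absz_nat => hd.
rewrite p_part lognX.
have -> : logn p b = 1%N.
  have l1 : (0 < logn p b)%N by rewrite logn_gt0 mem_primes pp b0 pb.
  have l2 : ~~ (2 <= logn p b)%N by rewrite -pfactor_dvdn // sf.
  lia.
by rewrite muln1.
Qed.

Lemma combine (P : nat -> nat -> Prop) (s : seq nat) :
  (forall p k k', P p k -> k <= k' -> P p k') ->
  (forall p, p \in s -> exists k, P p k) ->
  exists k, forall p, p \in s -> P p k.
Proof.
move=> mono; elim: s => [|a s IH] h; first by exists 0.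
have [k1 h1] := h a (mem_head _ _).
have [k2 h2] : exists k, forall p, p \in s -> P p k.
  by apply: IH => p ps; apply: h; rewrite inE ps orbT.
exists (k1 + k2) => p; rewrite inE => /orP [/eqP ->|ps].
  by apply: mono h1 _; exact: leq_addr.
by apply: mono (h2 p ps) _; exact: leq_addl.
Qed.

End Part5.
Import Part5.

Module Part6.
Import GRing.Theory Num.Theory.

Lemma per_prime (f : {poly int}) (b n p : nat) (y : int) :
  tower_stable f -> 0 < b -> f_valid f b -> prime p -> p %| b -> b * b <= n ->
  exists k, ((p ^ n.+1)%N%:Z %| (iter (k + b ^ n) (horner f) y - iter k (horner f) y)%R)%Z.
Proof.
move=> ts b0 [sf [vb fv]] pp pb hn.
set F := horner f.
have Fcong : forall d a c, (d %| (a - c)%R)%Z -> (d %| (F a - F c)%R)%Z.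
  by move=> d a c h; apply: horner_cong.
have p0 : 0 < p := prime_gt0 pp.
have pleb : p <= b := dvdn_leq b0 pb.
pose y0 : 'I_p := Ordinal (ltn_pmod `|(y %% p)%Z| p0).
have y0E : (p%:Z %| ((y0 : int) - y)%R)%Z.
  rewrite /= -modz_nat gez0_abs; last by rewrite modz_ge0 // -lt0n p0.
  rewrite modz_mod; exact: mod_dvd.
set L := cycle_len (red_map f p) y0.
have [[L0 [k0 Ek0]] _] := cycle_lenP (h := red_map f p) y0.
have [Lle Lfull] := cycle_len_le (h := red_map f p) y0.
rewrite card_ord -/L in Lle Lfull.
have Llt : L < p.
  rewrite ltn_neqAle Lle andbT; apply/eqP => E; exact: ts p pp (Lfull E).
have hx : (p%:Z %| (iter (k0 + L) F y - iter k0 F y)%R)%Z.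
  have h1 := (red_iter_eq f p y0 k0 (k0 + L)).1 Ek0.
  have h2 := cong_iter Fcong k0 y0E.
  have h3 := cong_iter Fcong (k0 + L) y0E.
  rewrite /F in h2 h3 *.
  have -> : (iter (k0 + L) (horner f) y - iter k0 (horner f) y =
     (iter k0 (horner f) y0 - iter k0 (horner f) y)
     - (iter k0 (horner f) y0 - iter (k0 + L) (horner f) y0)
     - (iter (k0 + L) (horner f) y0 - iter (k0 + L) (horner f) y))%R by ring.
  by apply: dvdzB => //; apply: dvdzB.
set x := iter k0 F y.
have gx : (p%:Z %| (iter L F x - x)%R)%Z by rewrite /x -iterD addnC.
have [a La] := @lin_iter_gen p%:Z F (fun z => f^`().[z])%R (fun z => poly_lin f p%:Z z) L x.
pose X := (p.-1 * L)%N.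
have X0 : 0 < X by rewrite muln_gt0 L0 -subn1 subn_gt0 prime_gt1.
have Xn : X <= n.
  apply: leq_trans hn; apply: leq_mul; last exact: ltnW (leq_trans Llt pleb).
  apply: leq_trans pleb; exact: leq_pred.
have Xq : forall q, prime q -> q %| X -> q %| b.
  move=> q qp; rewrite Euclid_dvdM // => /orP [qd|qL].
    exact: vb pp qp pb qd.
  apply: fv pp qp pb _; apply: dvdn_trans qL _.
  by apply: (biglcmn_sup y0).
have copX : coprime X p.
  rewrite coprimeMl !(coprime_sym _ p) !prime_coprime // !gtnNdvd //.
  - by rewrite -subn1 subn_gt0 prime_gt1.
  - by rewrite prednK.
have key : p ^ n * X %| b ^ n.
  rewrite Gauss_dvd; last by apply: coprimeXl; rewrite coprime_sym.
  by rewrite dvdn_exp2r // small_dvd.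
suff [k [P [hP Pd]]] : exists k P, ((p ^ n.+1)%N%:Z %| (iter (k + P) F y - iter k F y)%R)%Z /\ P %| b ^ n.
  exists k; have := per_mul Fcong hP (b ^ n %/ P) k (leqnn k).
  by rewrite mulnC divnK.
case: (boolP (p%:Z %| a)%Z) => pa.
  have La0 : Lin p (iter L F) 0 x by apply: lin_coef La _; rewrite subr0.
  have := contr La0 gx n.
  rewrite -!iterM => hc.
  exists (n * L + k0)%N, L; split.
    rewrite Posz_exp; move: hc; rewrite /x -!iterD.
    by have -> : (n * L + (L + k0) = n * L + k0 + L)%N by lia.
  apply: dvdn_trans key; rewrite dvdn_mull // dvdn_mull //.
have ferm := @fermat_int _ _ pp pa.
have [LG Gx] := lin_iter_fixed La gx p.-1.
have LG1 : Lin p (iter p.-1 (iter L F)) 1 x by apply: lin_coef LG ferm.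
have := lift_all LG1 Gx n.
rewrite -!iterM => hc.
exists k0, (p ^ n * (p.-1 * L))%N; split; last exact: key.
rewrite Posz_exp; move: hc; rewrite /x -iterD.
by rewrite addnC mulnA.
Qed.

End Part6.
Import Part6.

Import GRing.Theory Num.Theory.

Theorem proposition4p5 (f : {poly int}) (b : nat) :
  tower_stable f -> 0 < b -> f_valid f b ->
  exists N : nat, forall n : nat, N <= n -> 0 < n ->
    lambda_f f (b ^ n.+1) %| b ^ n.
Proof.
move=> ts b0 fvb.
have sf := fvb.1.
have Fcong : forall d a c, (d %| (a - c)%R)%Z -> (d %| ((horner f) a - (horner f) c)%R)%Z.
  by move=> d a c h; apply: horner_cong.
exists (b * b) => n hn _.
apply/dvdn_biglcmP => y _.
apply: cycle_len_dvd; split; first by rewrite expn_gt0 b0.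
have [k hk] : exists k, forall p, p \in primes b ->
    ((p ^ n.+1)%N%:Z %| (iter (k + b ^ n) (horner f) (y : int) - iter k (horner f) (y : int))%R)%Z.
  apply: (@combine (fun p k => ((p ^ n.+1)%N%:Z %| (iter (k + b ^ n) (horner f) (y : int) - iter k (horner f) (y : int))%R)%Z)).
    move=> p k k' h kk'. exact: (per_shift Fcong h kk').
  move=> p; rewrite mem_primes => /and3P [pp _ pb]; exact: per_prime.
exists k; apply/(red_iter_eq f (b ^ n.+1) y k (k + b ^ n)).
apply: (dvdz_eqr (opprB _ _)); apply: dvdzN.
apply: (@crt b n _ b0 sf) => p pp pb; apply: hk; by rewrite mem_primes pp b0 pb.
Qed.
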